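(* Let $Q$ be a sequence, $G=(V,E,\delta)$ a pangenome graph, $k_1,k_2>0$ integers, and $H_{gap}$ the directed graph defined in the context. If $v_{(i_0,u_0,f_0)},\dots,v_{(i_k,u_k,f_k)}$ is a directed path in $H_{gap}$, then $Q_{i_0}Q_{i_1}\cdots Q_{i_k}$ is a $(k_1,k_2)$-gap common subsequence between $Q$ and $G$.
   Context: Strings are 0-indexed; $S_i$ is the character of $S$ at position $i$. A pangenome graph is a triple $G=(V,E,\delta)$ where $(V,E)$ is a finite directed graph and $\delta:V\to\Sigma^*\setminus\{\epsilon\}$ assigns to each vertex a nonempty string over an alphabet $\Sigma$. A path in $G$ is a sequence of vertices $P=w_0,\dots,w_k$ ($k\ge0$) with $(w_j,w_{j+1})\in E$ for $j<k$; $spell(P)=\delta(w_0)\cdots\delta(w_k)$. A sequence $S$ is a $(k_1,k_2)$-gap common subsequence between $Q$ and $G$ if there is a path $P$ in $G$ and indices $p_0<\dots<p_{|S|-1}$ in $Q$ and $q_0<\dots<q_{|S|-1}$ in $spell(P)$ with $Q_{p_j}=spell(P)_{q_j}=S_j$ for all $j$, $p_j-p_{j-1}\le k_1$ and $q_j-q_{j-1}\le k_2$ for all $1\le j\le|S|-1$. The directed graph $H_{gap}$ has vertex set $\{v_{(i,u,f)}: 0\le i\le|Q|-1,\ u\in V,\ 0\le f\le|\delta(u)|-1,\ Q_i=\delta(u)_f\}$, and an edge from $v_{(i,u,f)}$ to $v_{(i',u',f')}$ if and only if $0<i'-i\le k_1$ and: if $u\ne u'$, there is a path $P=w_0,\dots,w_k$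 from $u=w_0$ to $u'=w_k$ in $G$ with $0<\sum_{j=0}^{k-1}|\delta(w_j)|+f'-f\le k_2$; if $u=u'$, then $0<f'-f\le k_2$. *)

(* Defs.v *)
From mathcomp Require Import all_boot.
Set Implicit Arguments. Unset Strict Implicit. Unset Printing Implicit Defensive.

Definition at_ {T : Type} (s : seq T) (i : nat) : option T := nth None (map Some s) i.

Record pangenome (Sigma : eqType) := Pangenome {
  pg_V :> finType;
  pg_E : rel pg_V;
  pg_delta : pg_V -> seq Sigma;
  pg_delta_nonempty : forall v, pg_delta v != [::] }.

Section Defs.
Variables (Sigma : eqType) (G : pangenome Sigma).

Definition spell (P : seq G) : seq Sigma := flatten (map (@pg_delta _ G) P).

Definition gpath (w0 : G) (ws : seq G) : bool := path (@pg_E _ G) w0 ws.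

Definition gap_common_subseq (k1 k2 : nat) (Q S : seq Sigma) : Prop :=
  exists (w0 : G) (ws : seq G) (ps qs : seq nat),
    [/\ gpath w0 ws,
        size ps = size S /\ size qs = size S,
        sorted ltn ps /\ sorted ltn qs,
        (forall j, j < size S ->
            at_ Q (nth 0 ps j) = at_ S j /\ at_ (spell (w0 :: ws)) (nth 0 qs j) = at_ S j)
      & (forall j, 0 < j < size S ->
            nth 0 ps j - nth 0 ps j.-1 <= k1 /\ nth 0 qs j - nth 0 qs j.-1 <= k2)].

Definition Hvertex (Q : seq Sigma) (x : nat * G * nat) : Prop :=
  let: (i, u, f) := x in
  [/\ i < size Q, f < size (pg_delta u) & at_ Q i = at_ (pg_delta u) f].

Definition Hedge (k1 k2 : nat) (x y : nat * G * nat) : Prop :=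
  let: (i, u, f) := x in
  let: (i', u', f') := y in
  0 < i' - i <= k1 /\
  (if u != u' then
     exists ws : seq G, [/\ gpath u ws, last u ws = u' &
        let s := sumn (map (fun w => size (pg_delta w)) (belast u ws)) in
        f < s + f' /\ s + f' - f <= k2]
   else 0 < f' - f <= k2).

Definition Hpath (Q : seq Sigma) (k1 k2 : nat) (x0 : nat * G * nat) (xs : seq (nat * G * nat)) : Prop :=
  (forall x, x \in x0 :: xs -> Hvertex Q x) /\
  (forall j, j < size xs -> Hedge k1 k2 (nth x0 (x0 :: xs) j) (nth x0 (x0 :: xs) j.+1)).

End Defs.

(* Main.v *)
Require Import Defs.
From mathcomp Require Import all_boot.
From mathcomp Require Import zify.

Lemma at_cons {T : Type} (y : T) s j : at_ (y :: s) j.+1 = at_ s j.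
Proof. by []. Qed.

Lemma at_catl {T : Type} (a b : seq T) n : n < size a -> at_ (a ++ b) n = at_ a n.
Proof. by move=> h; rewrite /at_ map_cat nth_cat size_map h. Qed.

Lemma at_catr {T : Type} (a b : seq T) n : at_ (a ++ b) (size a + n) = at_ b n.
Proof. by rewrite /at_ map_cat nth_cat size_map ltnNge leq_addr /= addKn. Qed.

Lemma at_some {T : Type} (s : seq T) i : i < size s -> at_ s i <> None.
Proof.
elim: s i => [|y s IH] [|i] //= h.
by rewrite at_cons; apply: IH.
Qed.

Lemma pmap_at {A : eqType} {B : Type} (f : A -> option B) (s : seq A) (x0 : A) :
  (forall x, x \in s -> f x <> None) ->
  size (pmap f s) = size s /\ (forall j, j < size s -> at_ (pmap f s) j = f (nth x0 s j)).
Proof.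
elim: s => [|y s IH] //= h.
have hy : f y <> None by apply: h; rewrite inE eqxx.
have [IH1 IH2] : size (pmap f s) = size s /\ (forall j, j < size s -> at_ (pmap f s) j = f (nth x0 s j)).
  by apply: IH => x hx; apply: h; rewrite inE hx orbT.
case E: (f y) => [b|] //=; split; first by rewrite IH1.
by case=> [|j] hj //=; rewrite at_cons IH2.
Qed.

Section S.
Variables (Sigma : eqType) (G : pangenome Sigma) (Q : seq Sigma) (k1 k2 : nat).

Lemma spell_cons (u : G) l : spell (u :: l) = pg_delta u ++ spell l.
Proof. by []. Qed.

Lemma size_spell (l : seq G) : size (spell l) = sumn (map (fun w => size (pg_delta w)) l).
Proof. by rewrite /spell size_flatten /shape -map_comp. Qed.

Lemma edgeU (i0 i1 f0 f1 : nat) (u0 u1 : G) :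
  Hedge k1 k2 (i0, u0, f0) (i1, u1, f1) ->
  0 < i1 - i0 <= k1 /\ exists ws1 : seq G, [/\ gpath u0 ws1, last u0 ws1 = u1 &
     let s := sumn (map (fun w => size (pg_delta w)) (belast u0 ws1)) in
        f0 < s + f1 /\ s + f1 - f0 <= k2].
Proof.
rewrite /Hedge; case: eqP => [<-|ne] /= [h1 h2]; split => //.
  exists [::]; split => //=; lia.
Qed.

Lemma aux (x0 : nat * G * nat) xs : Hpath Q k1 k2 x0 xs ->
  exists (ws : seq G) (qs : seq nat),
    [/\ gpath x0.1.2 ws, size qs = (size xs).+1, nth 0 qs 0 = x0.2,
        (forall j, j < (size xs).+1 -> at_ (spell (x0.1.2 :: ws)) (nth 0 qs j) = at_ Q (nth x0 (x0 :: xs) j).1.1)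
      & (forall j, j < size xs -> nth 0 qs j < nth 0 qs j.+1 <= nth 0 qs j + k2)].
Proof.
elim: xs x0 => [|x1 xs IH] [[i0 u0] f0] [hv he] /=.
  exists [::], [:: f0]; split => //= j; rewrite ltnS leqn0 => /eqP -> /=.
  have := hv (i0, u0, f0); rewrite inE eqxx => /(_ isT) [_ hf ha].
  by rewrite /spell /= cats0.
have hv0 := hv (i0, u0, f0); rewrite inE eqxx in hv0; case: (hv0 isT) => _ hf0 ha0; clear hv0.
have hp1 : Hpath Q k1 k2 x1 xs.
  split; first by move=> x hx; apply: hv; rewrite inE hx orbT.
  move=> j hj; have := he j.+1 hj; rewrite /= !(set_nth_default (i0,u0,f0) x1) // ?ltnS //.
  idtac.
  by rewrite /= ltnW.
have [ws [qs [hg hs hq0 hat hgap]]] := IH x1 hp1.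
move: hg hs hq0 hat hgap he hv.
case: x1 hp1 => [[i1 u1] f1] hp1 /= hg hs hq0 hat hgap he hv.
have := he 0 isT => /= /edgeU [hi [ws1 [hg1 hl1 /= [hs1 hs2]]]].
set s := sumn _ in hs1 hs2.
exists (ws1 ++ ws), (f0 :: map (addn s) qs); split => //=.
- by move: hg1 hg; rewrite /gpath /= cat_path hl1 => -> ->.
- by rewrite size_map hs.
- case=> [|j] hj /=; first by rewrite spell_cons at_catl.
  have -> : spell (u0 :: ws1 ++ ws) = spell (belast u0 ws1) ++ spell (u1 :: ws).
    by rewrite -cat_cons lastI cat_rcons hl1 /spell map_cat flatten_cat.
  rewrite (nth_map 0); last by rewrite hs.
  have -> : s = size (spell (belast u0 ws1)) by rewrite size_spell.
  by rewrite at_catr hat // (set_nth_default (i1,u1,f1)).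
- case=> [|j] hj /=.
  + rewrite (nth_map 0) ?hs // hq0; lia.
  + rewrite !(nth_map 0) ?hs //; try lia.
    have := hgap j hj; lia.
Qed.

End S.

Theorem lemma6 (Sigma : eqType) (G : pangenome Sigma) (Q : seq Sigma) (k1 k2 : nat)
  (hk1 : 0 < k1) (hk2 : 0 < k2)
  (x0 : nat * G * nat) (xs : seq (nat * G * nat)) :
  Hpath Q k1 k2 x0 xs ->
  gap_common_subseq G k1 k2 Q (pmap (fun x => at_ Q x.1.1) (x0 :: xs)).
Proof.
move=> hp.
have [ws [qs [hg hs hq0 hat hgap]]] := @aux _ _ _ _ _ _ _ hp.
have hsome : forall x, x \in x0 :: xs -> at_ Q x.1.1 <> None.
  move=> x hx; have := hp.1 x hx; case: x hx => [[i u] f] _ [hi _ _]; exact: at_some hi.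
have [hS1 hS2] := @pmap_at _ _ (fun x : nat * G * nat => at_ Q x.1.1) (x0 :: xs) x0 hsome.
have hedge : forall j, j < size xs ->
    (nth x0 (x0 :: xs) j).1.1 < (nth x0 (x0 :: xs) j.+1).1.1 <= (nth x0 (x0 :: xs) j).1.1 + k1.
  move=> j hj; have := hp.2 j hj.
  case: (nth x0 (x0 :: xs) j) => [[i u] f]; case: (nth x0 (x0 :: xs) j.+1) => [[i' u'] f'].
  rewrite /Hedge /= => [[h _]]; lia.
exists x0.1.2, ws, (map (fun x => x.1.1) (x0 :: xs)), qs; split => //.
- by rewrite size_map hS1 hs.
- split.
  + apply/(pathP 0) => j hj; rewrite size_map in hj.
    rewrite -/(map (fun x : nat * G * nat => x.1.1) xs).
    change (x0.1.1 :: map (fun x : nat * G * nat => x.1.1) xs) with (map (fun x : nat * G * nat => x.1.1) (x0 :: xs)).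
    rewrite (nth_map x0) ?(nth_map x0) //=; last lia.
    by case/andP: (hedge j hj).
  + case E: qs hs => [|q qs'] //= [hs]; rewrite E in hgap.
    apply/(pathP 0) => j hj; rewrite hs in hj.
    by case/andP: (hgap j hj).
- move=> j hj; rewrite hS1 in hj; rewrite hS2 // hat // (nth_map x0) //.
- move=> [|j]; rewrite hS1 //= => hj.
  change (x0.1.1 :: map (fun x : nat * G * nat => x.1.1) xs) with (map (fun x : nat * G * nat => x.1.1) (x0 :: xs)).
  rewrite (nth_map x0) // (nth_map x0) /=; last by rewrite /= ltnW.
  have := hgap j hj; have := hedge j hj; rewrite /=; lia.
Qed.
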